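(* For a set with apartness $X$, let $F(X)=X^*$ be the set of finite nonempty words $x_1\cdots x_m$ over $X$ (with componentwise equality), with apartness $x_1\cdots x_m\#y_1\cdots y_n$ iff $m\ne n$ or ($m=n$ and $\exists i\le m\; x_i\#y_i$), and multiplication given by concatenation; for a strongly extensional map $f:X\to Y$ let $F(f):F(X)\to F(Y)$ be $x_1\cdots x_m\mapsto f(x_1)\cdots f(x_m)$. Then $F$ is a functor from the category $\mathbf{Set}^{\#}$ of sets with apartness and strongly extensional maps to the category $\mathbf{Sg}^{\#}$ of semigroups with apartness and strongly extensional homomorphisms, and $F$ is left adjoint to the forgetful functor $V:\mathbf{Sg}^{\#}\to\mathbf{Set}^{\#}$. In particular, for every semigroup with apartness $S$ and every strongly extensional function $f:X\to S$ there is a unique strongly extensional homomorphism $\phi:F(X)\to S$ with $f=\phi\iota_X$, where $\iota_X:X\to F(X)$ is the inclusion of one-letter words.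
   Context: Constructive (intuitionistic) mathematics. An apartness relation $\#$ is irreflexive, symmetric and cotransitive ($x\#z\Rightarrow(x\#y\vee y\#z)$). A function $f$ between sets with apartness is strongly extensional if $f(x)\#f(y)\Rightarrow x\#y$. A semigroup with apartness is a semigroup with an apartness relation for which multiplication is strongly extensional: $xy\#zw\Rightarrow(x\#z\vee y\#w)$. *)

(* Defs.v *)
From Stdlib Require Import List Arith.
Import ListNotations.
Set Implicit Arguments.

Definition is_apartness (A : Type) (R : A -> A -> Prop) : Prop :=
  (forall x, ~ R x x) /\
  (forall x y, R x y -> R y x) /\
  (forall x y z, R x z -> R x y \/ R y z).

Definition strext (A B : Type) (apA : A -> A -> Prop) (apB : B -> B -> Prop)
  (f : A -> B) : Prop :=
  forall x y, apB (f x) (f y) -> apA x y.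

(* Objects of Set^# (equality is Leibniz equality of the carrier) *)
Record ApSet := {
  carrier :> Type;
  ap : carrier -> carrier -> Prop;
  ap_irrefl : forall x, ~ ap x x;
  ap_sym : forall x y, ap x y -> ap y x;
  ap_cotrans : forall x y z, ap x z -> ap x y \/ ap y z
}.
Arguments ap {_}.

Record ApSg := {
  sg_set :> ApSet;
  sg_mul : sg_set -> sg_set -> sg_set;
  sg_assoc : forall x y z, sg_mul x (sg_mul y z) = sg_mul (sg_mul x y) z;
  sg_mul_strext : forall x y z w,
      ap (sg_mul x y) (sg_mul z w) -> ap x z \/ ap y w
}.
Arguments sg_mul {_}.

Definition is_hom (A B : Type) (mA : A -> A -> A) (mB : B -> B -> B) (f : A -> B) :=
  forall x y, f (mA x y) = mB (f x) (f y).

(* Finite nonempty words x_1 ... x_m over X, encoded as (x_1, [x_2; ...; x_m]);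
   equality of words is (Leibniz) componentwise equality. *)
Definition word (X : Type) : Type := (X * list X)%type.

Definition letters (X : Type) (u : word X) : list X := fst u :: snd u.

Definition word_ap (X : ApSet) (u v : word X) : Prop :=
  length (letters u) <> length (letters v) \/
  (length (letters u) = length (letters v) /\
   exists i, i < length (letters u) /\
     ap (nth i (letters u) (fst u)) (nth i (letters v) (fst v))).

Definition word_mul (X : Type) (u v : word X) : word X :=
  (fst u, snd u ++ letters v).

Definition iota (X : Type) (x : X) : word X := (x, []).

Definition word_map (X Y : Type) (f : X -> Y) (u : word X) : word Y :=
  (f (fst u), map f (snd u)).
Arguments word_ap {X} u v.
Arguments word_mul {X} u v.
Arguments iota {X} x.

(* Main.v *)
Require Import Defs.
From Stdlib Require Import List Arith.

From Stdlib Require Import Lia.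
Import ListNotations.

Fixpoint lap {X : ApSet} (l m : list X) : Prop :=
  match l, m with
  | [], [] => False
  | x :: l', y :: m' => ap x y \/ lap l' m'
  | _, _ => True
  end.

Lemma lap_iff (X : ApSet) (l m : list X) d e :
  lap l m <-> (length l <> length m \/ (length l = length m /\
    exists i, i < length l /\ ap (nth i l d) (nth i m e))).
Proof.
  revert m; induction l as [|x l IH]; intros [|y m]; simpl.
  - split; [tauto|]. intros [H|[_ [i [Hi _]]]]; [now apply H| lia].
  - split; [intros _; left; discriminate|tauto].
  - split; [intros _; left; discriminate|tauto].
  - split.
    + intros [H|H].
      * destruct (Nat.eq_dec (length l) (length m)) as [E|E].
        -- right; split; [now rewrite E|]. exists 0; split; [lia|exact H].
        -- left; intro E'; apply E; now injection E'.
      * apply IH in H. destruct H as [H|[E [i [Hi Ha]]]].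
        -- left; intro E'; apply H; now injection E'.
        -- right; split; [now rewrite E|]. exists (S i); split; [lia|exact Ha].
    + intros [H|[E [[|i] [Hi Ha]]]].
      * right; apply IH; left; intro E; apply H; now rewrite E.
      * now left.
      * right; apply IH; right; split; [lia|]. exists i; split; [lia|exact Ha].
Qed.

Lemma word_ap_lap (X : ApSet) (u v : word X) :
  word_ap u v <-> lap (letters u) (letters v).
Proof. unfold word_ap. rewrite (@lap_iff X (letters u) (letters v) (fst u) (fst v)). tauto. Qed.

Lemma lap_irrefl (X : ApSet) (l : list X) : ~ lap l l.
Proof. induction l; simpl; [tauto|]. intros [H|H]; [exact (ap_irrefl _ _ H)|tauto]. Qed.

Lemma lap_sym (X : ApSet) (l m : list X) : lap l m -> lap m l.
Proof.
  revert m; induction l; intros [|y m]; simpl; try tauto.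
  intros [H|H]; [left; now apply ap_sym|right; auto].
Qed.

Lemma lap_cotrans (X : ApSet) (l m n : list X) : lap l n -> lap l m \/ lap m n.
Proof.
  revert m n; induction l as [|x l IH]; intros [|y m] [|z n]; simpl; try tauto.
  intros [H|H].
  - destruct (ap_cotrans _ _ y _ H); tauto.
  - destruct (IH m n H); tauto.
Qed.

Lemma lap_app (X : ApSet) (l1 l2 m1 m2 : list X) :
  lap (l1 ++ l2) (m1 ++ m2) -> lap l1 m1 \/ lap l2 m2.
Proof.
  revert m1; induction l1 as [|x l IH]; intros [|y m]; simpl; try tauto.
  intros [H|H]; [tauto|]. destruct (IH m H); tauto.
Qed.

Lemma lap_map (X Y : ApSet) (f : X -> Y) : strext ap ap f ->
  forall l m, lap (map f l) (map f m) -> lap l m.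
Proof.
  intros Hf l; induction l as [|x l IH]; intros [|y m]; simpl; try tauto.
  intros [H|H]; [left; now apply Hf|right; auto].
Qed.

Fixpoint ev {X : ApSet} {S : ApSg} (f : X -> S) (x : X) (l : list X) : S :=
  match l with
  | [] => f x
  | y :: l' => sg_mul (f x) (ev f y l')
  end.

Lemma ev_app (X : ApSet) (S : ApSg) (f : X -> S) l :
  forall x y m, ev f x (l ++ y :: m) = sg_mul (ev f x l) (ev f y m).
Proof.
  induction l as [|z l IH]; intros x y m; simpl; [reflexivity|].
  rewrite IH. apply sg_assoc.
Qed.

Lemma ev_strext (X : ApSet) (S : ApSg) (f : X -> S) : strext ap ap f ->
  forall l x m y, ap (ev f x l) (ev f y m) -> lap (x :: l) (y :: m).
Proof.
  intros Hf l; induction l as [|a l IH]; intros x [|b m] y; simpl; try tauto.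
  - intros H; left; now apply Hf.
  - intros H. destruct (sg_mul_strext _ _ _ _ _ H) as [H1|H1].
    + left; now apply Hf.
    + right; now apply IH.
Qed.

Theorem mainTheorem8 :
  (* F(X) is a semigroup with apartness *)
  (forall X : ApSet,
     is_apartness (@word_ap X) /\
     (forall u v w : word X,
        word_mul u (word_mul v w) = word_mul (word_mul u v) w) /\
     (forall u v u' v' : word X,
        word_ap (word_mul u v) (word_mul u' v') -> word_ap u u' \/ word_ap v v')) /\
  (* F on morphisms: strongly extensional homomorphisms *)
  (forall (X Y : ApSet) (f : X -> Y),
     strext ap ap f ->
     strext (@word_ap X) (@word_ap Y) (word_map f) /\
     is_hom (@word_mul X) (@word_mul Y) (word_map f)) /\
  (* functoriality *)
  (forall (X : ApSet) (u : word X), word_map (fun x : X => x) u = u) /\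
  (forall (X Y Z : ApSet) (f : X -> Y) (g : Y -> Z) (u : word X),
     word_map (fun x => g (f x)) u = word_map g (word_map f u)) /\
  (* the unit iota is a natural family of strongly extensional maps *)
  (forall X : ApSet, strext ap (@word_ap X) (@iota X)) /\
  (forall (X Y : ApSet) (f : X -> Y) (x : X),
     word_map f (iota x) = iota (f x)) /\
  (* universal property of iota (F is left adjoint to the forgetful V) *)
  (forall (X : ApSet) (S : ApSg) (f : X -> S),
     strext ap ap f ->
     exists phi : word X -> S,
       strext (@word_ap X) ap phi /\
       is_hom (@word_mul X) sg_mul phi /\
       (forall x, phi (iota x) = f x) /\
       (forall psi : word X -> S,
          strext (@word_ap X) ap psi ->
          is_hom (@word_mul X) sg_mul psi ->
          (forall x, psi (iota x) = f x) ->
          forall u, psi u = phi u)).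
Proof.
  split; [|split; [|split; [|split; [|split; [|split]]]]].
  - intros X. split; [split; [|split]|split].
    + intros x H. apply word_ap_lap in H. exact (lap_irrefl _ _ H).
    + intros x y H. apply word_ap_lap in H. apply word_ap_lap. now apply lap_sym.
    + intros x y z H. apply word_ap_lap in H.
      destruct (lap_cotrans _ _ (letters y) _ H); [left|right]; now apply word_ap_lap.
    + intros [a l] [b m] [c n]; unfold word_mul, letters; simpl. now rewrite <- app_assoc.
    + intros u v u' v' H. apply word_ap_lap in H.
      destruct u as [a l]; destruct u' as [b m].
      unfold word_mul, letters in H; simpl in H.
      destruct H as [H|H].
      * left; apply word_ap_lap; simpl; now left.
      * destruct (lap_app _ _ _ _ _ H); [left|right]; apply word_ap_lap; simpl; tauto.
  - intros X Y f Hf. split.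
    + intros [a l] [b m] H. apply word_ap_lap in H; apply word_ap_lap.
      unfold word_map, letters in *; simpl in *.
      destruct H as [H|H]; [left; now apply Hf|right; now apply (lap_map _ _ _ Hf)].
    + intros [a l] [b m]. unfold word_map, word_mul, letters; simpl.
      now rewrite map_app.
  - intros X [a l]. unfold word_map; simpl. now rewrite map_id.
  - intros X Y Z f g [a l]. unfold word_map; simpl. now rewrite map_map.
  - intros X x y H. apply word_ap_lap in H. simpl in H. tauto.
  - reflexivity.
  - intros X S f Hf. exists (fun u => ev f (fst u) (snd u)).
    split; [|split; [|split]].
    + intros [a l] [b m] H. apply word_ap_lap. exact (ev_strext _ _ _ Hf l a m b H).
    + intros [a l] [b m]. unfold word_mul, letters; simpl. apply ev_app.
    + reflexivity.
    + intros psi _ Hh Hi [a l]. simpl. revert a; induction l as [|b l IH]; intros a.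
      * apply Hi.
      * simpl. rewrite <- IH, <- Hi. rewrite <- Hh. reflexivity.
Qed.
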